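(* Let $\mathbf C=\{C_t\}_{t\in[0,1]}$ and $\mathbf C'=\{C'_t\}_{t\in[0,1]}$ be two families of bivariate copulas such that $C_t\preceq C'_t$ for every $t\in[0,1]$. Then for all bivariate copulas $A$ and $B$, $A\star_{\mathbf C}B\preceq A\star_{\mathbf C'}B$ (concordance order of $3$-copulas).
   Context: A bivariate copula is a map $C:[0,1]^2\to[0,1]$ with $C(u,0)=C(0,u)=0$, $C(u,1)=C(1,u)=u$, and $2$-increasing. For bivariate copulas $C,C'$, $C\preceq C'$ means $C(u_1,u_2)\le C'(u_1,u_2)$ for all $(u_1,u_2)\in[0,1]^2$. For $3$-copulas $D,D'$ (distribution functions on $[0,1]^3$ with uniform $[0,1]$ one-dimensional marginals), $D\preceq D'$ means $D(\mathbf u)\le D'(\mathbf u)$ and $\overline D(\mathbf u)\le\overline{D'}(\mathbf u)$ for all $\mathbf u\in[0,1]^3$, where $\overline D(u_1,u_2,u_3)=1-u_1-u_2-u_3+D(u_1,u_2,1)+D(u_1,1,u_3)+D(1,u_2,u_3)-D(u_1,u_2,u_3)$. For bivariate copulas $A,B$ and a family $\mathbf C=\{C_t\}$ of bivariate copulas, $(A\star_{\mathbf C} B)(u_1,u_2,u_3)=\int_{0}^{u_2} C_t\!\left(\tfrac{\partial}{\partial t} A(u_1,t),\tfrac{\partial}{\partial t} B(t,u_3)\right) dt$ (partial derivatives existing a.e.); this is a $3$-copula. *)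

(* Defs.v *)
From mathcomp Require Import all_boot all_order all_algebra.
From mathcomp Require Import all_classical all_reals all_analysis.
Set Implicit Arguments. Unset Strict Implicit. Unset Printing Implicit Defensive.
Import Order.TTheory GRing.Theory Num.Theory.
Local Open Scope classical_set_scope.
Local Open Scope ring_scope.

Section Copulas.
Variable R : realType.

Definition unitI : set R := `[0, 1]%classic.

Definition is_copula2 (C : R -> R -> R) : Prop :=
  (forall u, 0 <= u <= 1 -> C u 0 = 0 /\ C 0 u = 0 /\ C u 1 = u /\ C 1 u = u) /\
  (forall u1 u2 v1 v2, 0 <= u1 -> u1 <= u2 -> u2 <= 1 ->
     0 <= v1 -> v1 <= v2 -> v2 <= 1 ->
     C u2 v2 - C u2 v1 - C u1 v2 + C u1 v1 >= 0).

Definition copula2_le (C C' : R -> R -> R) : Prop :=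
  forall u1 u2, 0 <= u1 <= 1 -> 0 <= u2 <= 1 -> C u1 u2 <= C' u1 u2.

Definition survival3 (D : R -> R -> R -> R) (u1 u2 u3 : R) : R :=
  1 - u1 - u2 - u3 + D u1 u2 1 + D u1 1 u3 + D 1 u2 u3 - D u1 u2 u3.

Definition copula3_le (D D' : R -> R -> R -> R) : Prop :=
  forall u1 u2 u3, 0 <= u1 <= 1 -> 0 <= u2 <= 1 -> 0 <= u3 <= 1 ->
    D u1 u2 u3 <= D' u1 u2 u3 /\ survival3 D u1 u2 u3 <= survival3 D' u1 u2 u3.

(* partial derivatives (defined a.e.; derive1 returns the limit of the
   difference quotient, an arbitrary value where it does not exist) *)
Definition d2 (A : R -> R -> R) (u1 t : R) : R := derive1 (fun s => A u1 s) t.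
Definition d1 (B : R -> R -> R) (t u3 : R) : R := derive1 (fun s => B s u3) t.

Definition star_prod (C : R -> R -> R -> R) (A B : R -> R -> R)
  (u1 u2 u3 : R) : R :=
  fine (\int[@lebesgue_measure R]_(t in `[0%R, u2]%classic) (C t (d2 A u1 t) (d1 B t u3))%:E)%E.

End Copulas.

(* Main.v *)
Require Import Defs.
From mathcomp Require Import all_boot all_order all_algebra.
From mathcomp Require Import all_classical all_reals all_analysis.
Import Order.TTheory GRing.Theory Num.Theory.
Local Open Scope classical_set_scope.
Local Open Scope ring_scope.

From mathcomp Require Import measurable_realfun.
From mathcomp Require Import ring lra.
Import numFieldNormedType.Exports.

Set Implicit Arguments. Unset Strict Implicit.

Section Aux.
Variable R : realType.
Implicit Types (C : R -> R -> R).

Lemma cop_mono2 C x y y' : is_copula2 C -> 0 <= x <= 1 -> 0 <= y -> y <= y' -> y' <= 1 ->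
  0 <= C x y' - C x y <= y' - y.
Proof.
move=> [hb h2] /andP[x0 x1] y0 yy y1.
have y'0 : 0 <= y' by apply: le_trans yy.
have := h2 0 x y y' (lexx 0) x0 x1 y0 yy y1.
have := h2 x 1 y y' x0 x1 (lexx 1) y0 yy y1.
have [_ [Hy0 [_ Hy1]]] := hb y (ltac:(by rewrite y0 (le_trans yy y1))).
have [_ [Hy'0 [_ Hy'1]]] := hb y' (ltac:(by rewrite y'0 y1)).
rewrite Hy0 Hy1 Hy'0 Hy'1 => ? ?; apply/andP; split; lra.
Qed.

Lemma cop_mono1 C x x' y : is_copula2 C -> 0 <= y <= 1 -> 0 <= x -> x <= x' -> x' <= 1 ->
  0 <= C x' y - C x y <= x' - x.
Proof.
move=> [hb h2] /andP[y0 y1] x0 xx x1.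
have x'0 : 0 <= x' by apply: le_trans xx.
have := h2 x x' 0 y x0 xx x1 (lexx 0) y0 y1.
have := h2 x x' y 1 x0 xx x1 y0 y1 (lexx 1).
have [Hx0 [_ [Hx1 _]]] := hb x (ltac:(by rewrite x0 (le_trans xx x1))).
have [Hx'0 [_ [Hx'1 _]]] := hb x' (ltac:(by rewrite x'0 x1)).
rewrite Hx0 Hx1 Hx'0 Hx'1 => ? ?; apply/andP; split; lra.
Qed.

Lemma cop_bnd C x y : is_copula2 C -> 0 <= x <= 1 -> 0 <= y <= 1 -> 0 <= C x y <= 1.
Proof.
move=> hC hx /andP[y0 y1].
have := cop_mono2 hC hx (lexx 0) y0 y1.
have [hb _] := hC.
have [H0 [_ [H1 _]]] := hb x hx.
have := cop_mono2 hC hx y0 y1 (lexx 1).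
rewrite H0 H1 => /andP[? ?] /andP[? ?]; case/andP: hx => ? ?; apply/andP; split; lra.
Qed.

Lemma dfl (f : R -> R) a : ~ derivable f a 1 -> derive1 f a = 0.
Proof. by move=> H; rewrite derive1E /derive dvgP. Qed.

Lemma derive1_in (f : R -> R) t (S : set R) : closed S -> S 0 ->
  ((exists2 d, 0 < d & forall h, 0 < h < d -> S (h^-1 * (f (h + t) - f t))) \/
   (exists2 d, 0 < d & forall h, - d < h < 0 -> S (h^-1 * (f (h + t) - f t)))) ->
  S (derive1 f t).
Proof.
move=> cS S0 hS.
have [df|ndf] := pselect (derivable f t 1); last by rewrite dfl.
rewrite derive1E.
have hc : (fun h : R => h^-1 * (f (h + t) - f t)) @ 0^' --> 'D_1 f t.
  move: df; rewrite /derivable /derive.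
  have -> : (fun h : R => h^-1 *: (f (h *: 1 + t) - f t)) = (fun h => h^-1 * (f (h + t) - f t)).
    by apply/funext => h; rewrite /= -[h *: 1]/(h * 1) mulr1.
  done.
case: hS => -[d d0 hd].
- apply: (@closed_cvg _ _ (0:R)^'+ _ (fun h : R => h^-1 * (f (h + t) - f t)) S cS); last first.
    exact: (cvg_dnbhs_at_right hc).
  near=> h; apply: hd; apply/andP; split; first by near: h; exact: nbhs_right_gt.
  near: h; exists d => //= h hh h0; move: hh; rewrite /ball_ /= sub0r normrN => hh.
  by rewrite (le_lt_trans (ler_norm h)).
- apply: (@closed_cvg _ _ (0:R)^'- _ (fun h : R => h^-1 * (f (h + t) - f t)) S cS); last first.
    exact: (cvg_dnbhs_at_left hc).
  near=> h; apply: hd; apply/andP; split; last by near: h; exact: nbhs_left_lt.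
  near: h; exists d => //= h hh h0; move: hh; rewrite /ball_ /= sub0r normrN => hh.
  by rewrite ltrNl; apply: le_lt_trans hh; rewrite -normrN; exact: ler_norm.
Unshelve. all: by end_near.
Qed.
End Aux.

Section Deriv.
Variable R : realType.
Implicit Types (G : R -> R) (t h : R).

Definition mono1 (G : R -> R) := forall s u, s <= u -> 0 <= G u - G s <= u - s.
Definition Qd (G : R -> R) t h := h^-1 * (G (h + t) - G t).
Definition aS (G : R -> R) t (n : nat) := Qd G t (n.+1%:R^-1).
Definition Hf (G : R -> R) := fun s => - G (- s).

Lemma mono1H G : mono1 G -> mono1 (Hf G).
Proof.
move=> hG s u su; rewrite /Hf.
have := hG (-u) (-s); rewrite lerN2 => /(_ su) /andP[h1 h2].
apply/andP; split; lra.
Qed.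

Lemma QdH G t h : Qd (Hf G) (-t) h = Qd G t (-h).
Proof. by rewrite /Qd /Hf invrN !opprD !opprK; ring. Qed.

Lemma Qd_bnd G t h : mono1 G -> 0 < h -> 0 <= Qd G t h <= 1.
Proof.
move=> hG h0; have := hG t (h + t); rewrite lerDr (ltW h0) => /(_ isT).
rewrite addrK => /andP[A0 Ah]; rewrite /Qd; apply/andP; split.
  by rewrite mulr_ge0 // invr_ge0 ltW.
rewrite -(mulVf (lt0r_neq0 h0)); apply: ler_wpM2l => //.
by rewrite invr_ge0 ltW.
Qed.

Lemma Qd_est G t h x : mono1 G -> 0 < h -> h <= x ->
  `|Qd G t h - Qd G t x| <= 2 * (1 - h / x).
Proof.
move=> hG h0 hx; have x0 : 0 < x by apply: lt_le_trans hx.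
have := hG t (h + t); rewrite lerDr (ltW h0) => /(_ isT).
rewrite addrK => /andP[A0 Ah].
have := hG (h + t) (x + t); rewrite lerD2r hx => /(_ isT).
rewrite (_ : x + t - (h + t) = x - h); last by ring.
move=> /andP[BA0 BAh].
set A := G (h + t) - G t in A0 Ah *.
set u := h^-1; set v := x^-1.
have vu : v <= u by rewrite lef_pV2 // posrE.
have hu : h * u = 1 by rewrite mulfV // lt0r_neq0.
have xv : x * v = 1 by rewrite mulfV // lt0r_neq0.
have v0 : 0 <= v by rewrite invr_ge0 ltW.
have E : Qd G t h - Qd G t x = A * (u - v) - v * (G (x + t) - G (h + t)).
  by rewrite /Qd /A /u /v; ring.
have X1 : 0 <= A * (u - v) by rewrite mulr_ge0 // subr_ge0.
have X2 : A * (u - v) <= 1 - h * v.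
  apply: (@le_trans _ _ (h * (u - v))); first by apply: ler_wpM2r => //; rewrite subr_ge0.
  by rewrite mulrBr hu.
have Y1 : 0 <= v * (G (x + t) - G (h + t)) by rewrite mulr_ge0.
have Y2 : v * (G (x + t) - G (h + t)) <= 1 - h * v.
  apply: (@le_trans _ _ (v * (x - h))); first by apply: ler_wpM2l.
  by rewrite mulrBr mulrC xv mulrC.
rewrite E ler_norml; apply/andP; split; lra.
Qed.

Lemma right_est G t L : mono1 G -> aS G t @ \oo --> L ->
  forall e, 0 < e -> exists2 d, 0 < d & forall h, 0 < h < d -> `|L - Qd G t h| < e.
Proof.
move=> hG /cvgrPdist_lt hc e e0.
have e20 : 0 < e / 2 by rewrite divr_gt0.
have [N _ hN] := hc (e / 2) e20.
set M := maxn N (Num.truncn (4 / e)).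
exists (M.+1%:R^-1); first by rewrite invr_gt0 ltr0Sn.
move=> h /andP[h0 hd].
have hi0 : 0 <= h^-1 by rewrite invr_ge0 ltW.
have /andP[hk1 hk2] := truncn_itv hi0.
set k := Num.truncn h^-1 in hk1 hk2.
have Mh : M.+1%:R < h^-1 by rewrite -(invrK (M.+1%:R)) ltf_pV2 ?posrE ?invr_gt0 ?ltr0Sn.
have kM : (M.+1 <= k)%N.
  by have := lt_trans Mh hk2; rewrite ltr_nat ltnS.
have k0 : (0 < k)%N by apply: leq_trans kM.
have kR0 : 0 < k%:R :> R by rewrite ltr0n.
have hk : h <= k%:R^-1.
  by rewrite -(invrK h) lef_pV2 ?posrE ?invr_gt0.
have hk3 : 1 - h / k%:R^-1 < h.
  rewrite invrK; have := hk2; rewrite -(ltr_pM2l h0) mulfV ?lt0r_neq0 // mulrSr.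
  lra.
have e4 : 4 / e < M.+1%:R.
  have h4 : 0 <= 4 / e by rewrite divr_ge0 // ltW.
  have /andP[_ t2] := truncn_itv h4.
  apply: (lt_le_trans t2); rewrite ler_nat ltnS; exact: leq_maxr.
have he : h < e / 4.
  apply: (lt_trans hd); rewrite -(invrK (e / 4)) ltf_pV2 ?posrE ?invr_gt0 ?divr_gt0 //.
  by rewrite invf_div.
have est := Qd_est t hG h0 hk.
have kE : k = k.-1.+1 by rewrite prednK.
have Nk : (N <= k.-1)%N.
  by rewrite -ltnS -kE; apply: leq_trans kM; rewrite ltnS leq_maxl.
have := hN k.-1 Nk; rewrite /aS -kE => hL.
have tri : `|L - Qd G t h| <= `|L - Qd G t k%:R^-1| + `|Qd G t h - Qd G t k%:R^-1|.
  by rewrite (distrC (Qd G t h)); apply: ler_distD.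
lra.
Qed.

Lemma two_cvg G t L : mono1 G -> aS G t @ \oo --> L -> aS (Hf G) (-t) @ \oo --> L ->
  Qd G t @ (0:R)^' --> (L : R^o).
Proof.
move=> hG ha hb; apply/cvgrPdist_lt => e e0.
have [d1 d10 h1] := right_est hG ha e0.
have [d2 d20 h2] := right_est (mono1H hG) hb e0.
exists (Num.min d1 d2) => /=; first by rewrite lt_min d10 d20.
move=> h hh hn0; move: hh; rewrite /ball_ /= sub0r normrN lt_min => /andP[hd1 hd2].
have [hpos|hneg] := ltP 0 h.
  by apply: h1; rewrite hpos /= (le_lt_trans (ler_norm h)).
have hneg' : h < 0 by rewrite lt_neqAle hn0 hneg.
rewrite -(opprK h) -QdH; apply: h2; rewrite oppr_gt0 hneg' /=.
by rewrite (le_lt_trans _ hd2) // -normrN ler_norm.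
Qed.

Lemma Qd_derivable G t L : Qd G t @ (0:R)^' --> (L : R^o) -> derivable G t 1 /\ derive1 G t = L.
Proof.
move=> hc.
have E : (fun h : R => h^-1 *: (G (h *: 1 + t) - G t)) = Qd G t.
  by apply/funext => h; rewrite /Qd /= -[h *: 1]/(h * 1) mulr1.
have dG : derivable G t 1 by rewrite /derivable E; exact: cvgP hc.
split => //; rewrite derive1E /derive E; exact: cvg_lim hc.
Qed.

Lemma derivable_seq G t : derivable G t 1 ->
  aS G t @ \oo --> derive1 G t /\ aS (Hf G) (-t) @ \oo --> derive1 G t.
Proof.
move=> dG.
have E : (fun h : R => h^-1 *: (G (h *: 1 + t) - G t)) = Qd G t.
  by apply/funext => h; rewrite /Qd /= -[h *: 1]/(h * 1) mulr1.
have hc : Qd G t @ (0:R)^' --> (derive1 G t : R^o).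
  by move: dG; rewrite /derivable derive1E /derive E.
have H := (cvgr_dnbhsP _ _ _).1 hc.
split.
  have := H (fun n => n.+1%:R^-1); apply; split.
    by move=> n; rewrite invr_eq0 pnatr_eq0.
  exact: (@cvg_harmonic R).
have -> : aS (Hf G) (-t) = (fun n => Qd G t (- n.+1%:R^-1)).
  by apply/funext => n; rewrite /aS QdH.
have := H (fun n => - n.+1%:R^-1); apply; split.
  by move=> n; rewrite oppr_eq0 invr_eq0 pnatr_eq0.
rewrite -oppr0; apply: cvgN; exact: (@cvg_harmonic R).
Qed.

End Deriv.

Section Deriv2.
Variable R : realType.
Implicit Types (G : R -> R) (t h : R) (u : R^nat).

Lemma bnd_ub u : (forall n, 0 <= u n <= 1) -> has_ubound (range u).
Proof. by move=> hu; exists 1 => _ [n _ <-]; case/andP: (hu n). Qed.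
Lemma bnd_lb u : (forall n, 0 <= u n <= 1) -> has_lbound (range u).
Proof. by move=> hu; exists 0 => _ [n _ <-]; case/andP: (hu n). Qed.
Lemma bndN_ub u : (forall n, 0 <= u n <= 1) -> has_ubound (range (fun n => - u n)).
Proof. by move=> hu; exists 0 => _ [n _ <-]; case/andP: (hu n); rewrite oppr_le0. Qed.
Lemma bndN_lb u : (forall n, 0 <= u n <= 1) -> has_lbound (range (fun n => - u n)).
Proof. by move=> hu; exists (-1) => _ [n _ <-]; case/andP: (hu n); rewrite lerN2. Qed.

Lemma sup_of_cvg u l : u @ \oo --> l ->
  limn_sup u = l /\ limn_sup (fun n => - u n) = - l.
Proof.
move=> ul; split; first exact: (cvg_limn_inf_sup ul).2.
have : (fun n => - u n) @ \oo --> - l by apply: cvgN.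
by move=> /cvg_limn_inf_sup [].
Qed.

Lemma bnd_fun u : (forall n, `|u n| <= 1) -> bounded_fun u.
Proof. by move=> hu; exists 1; split => // M M1 n _; apply: le_trans (hu n) (ltW M1). Qed.

Lemma sups_cvg u : (forall n, `|u n| <= 1) ->
  sups u @ \oo --> limn_sup u.
Proof.
move=> hu; have bu := bnd_fun hu; rewrite limn_supE //.
apply: cvg_sups_inf; [exact: bounded_fun_has_ubound|exact: bounded_fun_has_lbound].
Qed.

Lemma nrm01 u : (forall n, 0 <= u n <= 1) -> forall n, `|u n| <= 1.
Proof. by move=> hu n; case/andP: (hu n) => ? ?; rewrite ger0_norm. Qed.
Lemma nrmN01 u : (forall n, 0 <= u n <= 1) -> forall n, `|- u n| <= 1.
Proof. by move=> hu n; rewrite normrN; exact: nrm01. Qed.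

Lemma cvg_of_sup u : (forall n, 0 <= u n <= 1) ->
  limn_sup u = - limn_sup (fun n => - u n) -> u @ \oo --> limn_sup u.
Proof.
move=> hu E.
have s1 := sups_cvg (nrm01 hu).
have s2 := sups_cvg (nrmN01 hu).
have i1 : infs u @ \oo --> limn_sup u.
  have -> : infs u = (fun n => - sups (fun k => - u k) n).
    apply/funext => n; have := supsN u; move/(congr1 (fun f => f n)).
    by rewrite /= => ->; rewrite opprK.
  by rewrite E; apply: cvgN.
apply: (squeeze_cvgr _ i1 s1); apply: nearW => n; apply/andP; split.
- apply: ge_inf; last by exists n => /=.
  by apply: has_lbound_sdrop; exact: bnd_lb.
- apply: ub_le_sup; last by exists n => /=.
  by apply: has_ubound_sdrop; exact: bnd_ub.
Qed.


Lemma aS_bnd G t : mono1 G -> forall n, 0 <= aS G t n <= 1.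
Proof. by move=> hG n; apply: Qd_bnd; rewrite // invr_gt0 ltr0Sn. Qed.

Definition pD G t := [&& (limn_sup (aS G t) == - limn_sup (fun n => - aS G t n)),
   (limn_sup (aS (Hf G) (-t)) == - limn_sup (fun n => - aS (Hf G) (-t) n)) &
   (limn_sup (aS G t) == limn_sup (aS (Hf G) (-t)))].
Definition Dfun G t := if pD G t then limn_sup (aS G t) else 0.

Lemma derive_Dfun G t : mono1 G -> derive1 G t = Dfun G t.
Proof.
move=> hG; have [dG|ndG] := pselect (derivable G t 1).
  have [ha hb] := derivable_seq dG.
  have [s1 s2] := sup_of_cvg ha; have [s3 s4] := sup_of_cvg hb.
  by rewrite /Dfun /pD s1 s2 s3 s4 opprK !eqxx.
rewrite dfl // /Dfun; case: ifPn => // /and3P[/eqP p1 /eqP p2 /eqP p3].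
exfalso; apply: ndG.
have ha := cvg_of_sup (aS_bnd t hG) p1.
have hb := cvg_of_sup (aS_bnd (-t) (mono1H hG)) p2.
rewrite -p3 in hb.
exact: (Qd_derivable (two_cvg hG ha hb)).1.
Qed.


Lemma homoG G : mono1 G -> {homo G : x y / x <= y}.
Proof. by move=> hG x y xy; have /andP[h _] := hG _ _ xy; rewrite -subr_ge0. Qed.

Lemma aS_meas G n : mono1 G -> measurable_fun setT (fun t => aS G t n).
Proof.
move=> hG; rewrite /aS /Qd.
apply: measurable_funM; first exact: measurable_cst.
apply: measurable_funB.
  by apply: nondecreasing_measurable => // x y xy; apply: homoG => //; rewrite lerD2l.
by apply: nondecreasing_measurable => //; exact: homoG.
Qed.

Lemma aSH_meas G n : mono1 G -> measurable_fun setT (fun t => aS (Hf G) (-t) n).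
Proof.
move=> hG; apply: (measurableT_comp (f := fun s => aS (Hf G) s n) (g := fun t => - t)).
  exact: aS_meas (mono1H hG).
by apply: measurable_funN; exact: measurable_id.
Qed.

Lemma lsup_meas (hs : (R -> R)^nat) : (forall n, measurable_fun setT (hs n)) ->
  (forall t n, `|hs n t| <= 1) -> measurable_fun setT (fun t => limn_sup (hs ^~ t)).
Proof.
move=> mh hb; apply: measurable_fun_limn_sup => // t _.
  by exists 1 => _ [n _ <-]; have := hb t n; rewrite ler_norml => /andP[].
by exists (-1) => _ [n _ <-]; have := hb t n; rewrite ler_norml => /andP[].
Qed.

Lemma Dfun_meas G : mono1 G -> measurable_fun setT (Dfun G).
Proof.
move=> hG.
have b1 t n : `|aS G t n| <= 1 by apply: nrm01; exact: aS_bnd.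
have b2 t n : `|aS (Hf G) (-t) n| <= 1 by apply: nrm01; apply: aS_bnd; exact: mono1H.
have m1 := @lsup_meas (fun n t => aS G t n) (fun n => aS_meas n hG) b1.
have m2 := @lsup_meas (fun n t => - aS G t n)
  (fun n => measurable_funN (aS_meas n hG)) (fun t n => ltac:(by rewrite normrN)).
have m3 := @lsup_meas (fun n t => aS (Hf G) (-t) n) (fun n => aSH_meas n hG) b2.
have m4 := @lsup_meas (fun n t => - aS (Hf G) (-t) n)
  (fun n => measurable_funN (aSH_meas n hG)) (fun t n => ltac:(by rewrite normrN)).
apply: (measurable_fun_ifT _ m1 (measurable_cst _)).
rewrite /pD; apply: measurable_and; last apply: measurable_and.
- by apply: measurable_fun_eqr => //; exact: measurable_funN.
- by apply: measurable_fun_eqr => //; exact: measurable_funN.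
- exact: measurable_fun_eqr.
Qed.

End Deriv2.

Section Deriv3.
Variable R : realType.
Implicit Types (g G : R -> R) (t h : R).

Definition clamp (s : R) : R := if s < 0 then 0 else if 1 < s then 1 else s.

Lemma clamp01 s : 0 <= clamp s <= 1.
Proof. rewrite /clamp; case: ltP => ?; [lra|case: ltP => ?; lra]. Qed.

Lemma clamp_id s : 0 <= s <= 1 -> clamp s = s.
Proof. move=> /andP[? ?]; rewrite /clamp; case: ltP => ?; [lra|case: ltP => ?; lra]. Qed.

Lemma clamp_mono s u : s <= u -> 0 <= clamp u - clamp s <= u - s.
Proof.
move=> su; rewrite /clamp; case: (ltP s 0) => ?; case: (ltP u 0) => ?;
  try case: (ltP 1 s) => ?; try case: (ltP 1 u) => ?; apply/andP; split; lra.
Qed.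

Definition mono01 g := forall s u, 0 <= s -> s <= u -> u <= 1 -> 0 <= g u - g s <= u - s.

Lemma mono1_clamp g : mono01 g -> mono1 (fun s => g (clamp s)).
Proof.
move=> hg s u su; have /andP[c1 c2] := clamp_mono su.
have /andP[s0 s1] := clamp01 s; have /andP[u0 u1] := clamp01 u.
have cs : clamp s <= clamp u by rewrite -subr_ge0.
have /andP[h1 h2] := hg _ _ s0 cs u1.
apply/andP; split => //; lra.
Qed.

Lemma deriv_local g t : 0 < t < 1 -> derive1 g t = derive1 (fun s => g (clamp s)) t.
Proof.
move=> /andP[t0 t1]; rewrite !derive1E; apply: near_eq_derive.
near=> x; rewrite clamp_id //; apply/andP; split; apply: ltW.
  by near: x; exact: lt_nbhsr.
by near: x; exact: lt_nbhsl.
Unshelve. all: by end_near.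
Qed.

Lemma deriv_meas g : mono01 g -> measurable_fun (`[0, 1] : set R) (derive1 g).
Proof.
move=> hg; set G := fun s => g (clamp s).
have hG : mono1 G by exact: mono1_clamp.
set m := fun t => if t == 0 then derive1 g 0 else if t == 1 then derive1 g 1 else Dfun G t.
have mm : measurable_fun setT m.
  have e0 : measurable_fun setT (fun t : R => t == 0).
    by apply: measurable_fun_eqr; [exact: measurable_id|exact: measurable_cst].
  have e1 : measurable_fun setT (fun t : R => t == 1).
    by apply: measurable_fun_eqr; [exact: measurable_id|exact: measurable_cst].
  apply: (measurable_fun_ifT e0 (measurable_cst _)).
  exact: (measurable_fun_ifT e1 (measurable_cst _) (Dfun_meas hG)).
apply: (@eq_measurable_fun _ _ _ _ _ m (derive1 g)); last first.
  by apply: (measurable_funS _ _ mm) => //.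
move=> t; rewrite inE /= in_itv /= => /andP[t0 t1]; rewrite /m.
case: eqP => [->//|tn0]; case: eqP => [->//|tn1].
rewrite -derive_Dfun //; symmetry; apply: deriv_local.
apply/andP; split; rewrite lt_neqAle; apply/andP; split => //.
  by apply/eqP => /esym.
by apply/eqP.
Qed.

End Deriv3.

Section Comp.
Variable R : realType.
Implicit Types (v : R).

Lemma sum_collapse (K : nat) (P Q : nat -> bool) (c : nat -> nat -> R) i0 j0 :
  (i0 < K)%N -> (j0 < K)%N -> (forall i, P i = (i == i0)) -> (forall j, Q j = (j == j0)) ->
  \sum_(i < K) \sum_(j < K) (if P i && Q j then c i j else 0) = c i0 j0.
Proof.
move=> hi hj hP hQ.
rewrite (bigD1 (Ordinal hi)) //=.
rewrite [X in _ + X]big1 ?addr0; last first.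
  move=> i ni; apply: big1 => j _; rewrite hP; case: eqP => // ei.
  by exfalso; move/negP: ni; apply; apply/eqP/val_inj.
rewrite (bigD1 (Ordinal hj)) //= [X in _ + X]big1 ?addr0; last first.
  move=> j nj; rewrite hQ; case: eqP => ej; last by rewrite andbF.
  by exfalso; move/negP: nj; apply; apply/eqP/val_inj.
by rewrite hP hQ !eqxx.
Qed.

Definition ind (v : R) (K i : nat) : bool := (i%:R <= v * K%:R) && (v * K%:R < i.+1%:R).

Lemma ind_eq v K i : 0 <= v -> ind v K i = (i == Num.truncn (v * K%:R)).
Proof.
move=> v0; rewrite /ind eq_sym truncn_eq //.
by rewrite mulr_ge0.
Qed.

Lemma trunc_bnd v K : 0 <= v <= 1 -> (Num.truncn (v * K%:R) < K.+1)%N.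
Proof.
move=> /andP[v0 v1]; rewrite ltnS truncn_le_nat.
apply: (le_lt_trans (y := K%:R)); last by rewrite ltr_nat.
by rewrite -{2}(mul1r K%:R) ler_wpM2r.
Qed.

Lemma trunc_dist v K : 0 <= v -> (0 < K)%N ->
  `|(Num.truncn (v * K%:R))%:R / K%:R - v| <= K%:R^-1.
Proof.
move=> v0 K0; have vK0 : 0 <= v * K%:R by rewrite mulr_ge0.
have /andP[t1 t2] := truncn_itv vK0.
set k := Num.truncn _ in t1 t2 *.
have KR : 0 < K%:R :> R by rewrite ltr0n.
have e1 : k%:R / K%:R <= v.
  by rewrite ler_pdivrMr.
have e2 : v - k%:R / K%:R < K%:R^-1.
  rewrite ltrBlDr (_ : K%:R^-1 + k%:R / K%:R = k.+1%:R / K%:R); last first.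
    by rewrite -natr1 mulrDl mul1r addrC.
  by rewrite ltr_pdivlMr.
rewrite distrC ger0_norm ?subr_ge0 //; exact: ltW.
Qed.


Lemma trunc01 v K : 0 <= v <= 1 -> (0 < K)%N ->
  0 <= ((Num.truncn (v * K%:R))%:R / K%:R : R) <= 1.
Proof.
move=> hv K0; have : (Num.truncn (v * K%:R) <= K)%N by rewrite -ltnS; exact: trunc_bnd.
rewrite -(@ler_nat R) => hk.
have KR : 0 < K%:R :> R by rewrite ltr0n.
apply/andP; split; first by rewrite divr_ge0.
by rewrite ler_pdivrMr // mul1r.
Qed.

Definition FN (C : R -> R -> R -> R) (x y : R -> R) (N : nat) (t : R) : R :=
  \sum_(i < N.+2) \sum_(j < N.+2)
     (if ind (x t) N.+1 i && ind (y t) N.+1 j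
      then C t (i%:R / N.+1%:R) (j%:R / N.+1%:R) else 0).

Lemma FN_eq C x y N t : 0 <= x t <= 1 -> 0 <= y t <= 1 ->
  FN C x y N t = C t ((Num.truncn (x t * N.+1%:R))%:R / N.+1%:R)
                     ((Num.truncn (y t * N.+1%:R))%:R / N.+1%:R).
Proof.
move=> hx hy; rewrite /FN.
apply: (@sum_collapse N.+2 (ind (x t) N.+1) (ind (y t) N.+1)
   (fun i j => C t (i%:R / N.+1%:R) (j%:R / N.+1%:R))).
- exact: trunc_bnd.
- exact: trunc_bnd.
- by move=> i; apply: ind_eq; case/andP: hx.
- by move=> j; apply: ind_eq; case/andP: hy.
Qed.

Let D : set R := `[0, 1].

Lemma ind_meas (x : R -> R) K i : measurable_fun D x -> measurable_fun D (fun t => ind (x t) K i).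
Proof.
move=> mx; rewrite /ind; apply: measurable_and.
  apply: measurable_fun_ler; first exact: measurable_cst.
  by apply: measurable_funM => //; exact: measurable_cst.
apply: measurable_fun_ltr; last exact: measurable_cst.
by apply: measurable_funM => //; exact: measurable_cst.
Qed.

Lemma FN_meas C x y N :
  (forall a b, 0 <= a <= 1 -> 0 <= b <= 1 -> measurable_fun D (fun t => C t a b)) ->
  measurable_fun D x -> measurable_fun D y -> measurable_fun D (FN C x y N).
Proof.
move=> mC mx my; rewrite /FN.
apply: measurable_sum => i; apply: measurable_sum => j.
apply: measurable_fun_if => //.
- exact: measurable_itv.
- by apply: measurable_and; exact: ind_meas.
- apply: (measurable_funS _ _ (mC _ _ _ _)) => //.
  + exact: measurable_itv.
  + apply/andP; split; first by rewrite divr_ge0.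
    by rewrite ler_pdivrMr ?ltr0Sn // mul1r ler_nat -ltnS ltn_ord.
  + apply/andP; split; first by rewrite divr_ge0.
    by rewrite ler_pdivrMr ?ltr0Sn // mul1r ler_nat -ltnS ltn_ord.
Qed.


Lemma comp_meas (C : R -> R -> R -> R) (x y : R -> R) :
  (forall t, 0 <= t <= 1 -> forall a b a' b', 0 <= a <= 1 -> 0 <= b <= 1 ->
     0 <= a' <= 1 -> 0 <= b' <= 1 ->
     `|C t a b - C t a' b'| <= `|a - a'| + `|b - b'|) ->
  (forall a b, 0 <= a <= 1 -> 0 <= b <= 1 -> measurable_fun D (fun t => C t a b)) ->
  measurable_fun D x -> measurable_fun D y ->
  (forall t, 0 <= t <= 1 -> 0 <= x t <= 1) -> (forall t, 0 <= t <= 1 -> 0 <= y t <= 1) ->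
  measurable_fun D (fun t => C t (x t) (y t)).
Proof.
move=> hL mC mx my hx hy.
apply: (@measurable_fun_cvg _ _ _ _ (fun N => FN C x y N)).
  by move=> N; exact: FN_meas.
move=> t; rewrite /D /= in_itv /= => t01.
have hxt := hx t t01; have hyt := hy t t01.
apply/cvgrPdist_le => e e0.
have e20 : 0 < e / 2 by rewrite divr_gt0.
have := @cvg_harmonic R; move/cvgrPdist_lt => /(_ (e / 2) e20).
apply: filterS => N hN.
move: hN; rewrite sub0r normrN ger0_norm ?harmonic_ge0 // /harmonic /= => hN.
rewrite FN_eq //.
have d1 := trunc_dist (proj1 (andP hxt)) (ltn0Sn N).
have d2 := trunc_dist (proj1 (andP hyt)) (ltn0Sn N).
have := hL t t01 _ _ _ _ hxt hyt (trunc01 hxt (ltn0Sn N)) (trunc01 hyt (ltn0Sn N)).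
rewrite (distrC (x t)) (distrC (y t)).
move=> H; apply: (le_trans H); apply: (le_trans (lerD d1 d2)).
by rewrite [leRHS]splitr; apply: lerD; apply: ltW.
Qed.

End Comp.

Section Main.
Variable R : realType.
Implicit Types (g : R -> R) (C : R -> R -> R) (t h : R).

Lemma Q01r g t h : mono01 g -> 0 <= t -> 0 < h -> h + t <= 1 ->
  0 <= h^-1 * (g (h + t) - g t) <= 1.
Proof.
move=> hg t0 h0 ht; have := hg t (h + t) t0; rewrite lerDr (ltW h0) => /(_ isT ht).
rewrite addrK => /andP[A0 Ah]; apply/andP; split.
  by rewrite mulr_ge0 // invr_ge0 ltW.
rewrite -(mulVf (lt0r_neq0 h0)); apply: ler_wpM2l => //.
by rewrite invr_ge0 ltW.
Qed.

Lemma Q01l g t h : mono01 g -> t <= 1 -> h < 0 -> 0 <= h + t ->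
  0 <= h^-1 * (g (h + t) - g t) <= 1.
Proof.
move=> hg t1 h0 ht; have := hg (h + t) t ht; rewrite gerDr (ltW h0) => /(_ isT t1).
rewrite (_ : t - (h + t) = - h); last by ring.
move=> /andP[A0 Ah].
have -> : h^-1 * (g (h + t) - g t) = (- h)^-1 * (g t - g (h + t)).
  by rewrite invrN mulNr -mulrN opprB.
have h0' : 0 < - h by rewrite oppr_gt0.
apply/andP; split; first by rewrite mulr_ge0 // invr_ge0 ltW.
rewrite -(mulVf (lt0r_neq0 h0')); apply: ler_wpM2l => //.
by rewrite invr_ge0 ltW.
Qed.

Lemma deriv01 g t : mono01 g -> 0 <= t <= 1 -> 0 <= derive1 g t <= 1.
Proof.
move=> hg /andP[t0 t1].
have : [set` `[0, 1]] (derive1 g t).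
  apply: derive1_in.
  - exact: interval_closed.
  - by rewrite /= in_itv /= lexx ler01.
  have [tlt1|tge1] := ltP t 1.
    left; exists (1 - t); first by rewrite subr_gt0.
    move=> h /andP[h0 h1]; rewrite /= in_itv /=; apply: Q01r => //; lra.
  right; exists 1 => // h /andP[h0 h1]; rewrite /= in_itv /=; apply: Q01l => //; lra.
by rewrite /= in_itv.
Qed.

Lemma derivid g t : (forall s, 0 <= s <= 1 -> g s = s) -> 0 <= t <= 1 ->
  derive1 g t = 0 \/ derive1 g t = 1.
Proof.
move=> hg /andP[t0 t1].
have : ([set x | x = 0] `|` [set x | x = 1]) (derive1 g t).
  apply: derive1_in.
  - by apply: closedU; exact: closed_eq.
  - by left.
  have [tlt1|tge1] := ltP t 1.
    left; exists (1 - t); first by rewrite subr_gt0.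
    move=> h /andP[h0 h1]; right => /=.
    have e1 : g (h + t) = h + t by apply: hg; apply/andP; split; lra.
    have e2 : g t = t by apply: hg; apply/andP; split; lra.
    by rewrite e1 e2 addrK mulVf // lt0r_neq0.
  right; exists 1 => // h /andP[h0 h1]; right => /=.
  have e1 : g (h + t) = h + t by apply: hg; apply/andP; split; lra.
  have e2 : g t = t by apply: hg; apply/andP; split; lra.
  by rewrite e1 e2 addrK mulVf // ltr0_neq0.
by [].
Qed.

Lemma cop_lip C : is_copula2 C -> forall a b a' b', 0 <= a <= 1 -> 0 <= b <= 1 ->
  0 <= a' <= 1 -> 0 <= b' <= 1 -> `|C a b - C a' b'| <= `|a - a'| + `|b - b'|.
Proof.
move=> hC a b a' b' ha hb ha' hb'.
have l1 : `|C a b - C a' b| <= `|a - a'|.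
  case/andP: ha => a0 a1; case/andP: ha' => a'0 a'1.
  have [aa|aa] := leP a a'.
    have /andP[? ?] := cop_mono1 hC hb a0 aa a'1.
    rewrite distrC (distrC a) !ger0_norm; lra.
  have /andP[? ?] := cop_mono1 hC hb a'0 (ltW aa) a1.
  rewrite !ger0_norm; lra.
have l2 : `|C a' b - C a' b'| <= `|b - b'|.
  case/andP: hb => b0 b1; case/andP: hb' => b'0 b'1.
  have [bb|bb] := leP b b'.
    have /andP[? ?] := cop_mono2 hC ha' b0 bb b'1.
    rewrite distrC (distrC b) !ger0_norm; lra.
  have /andP[? ?] := cop_mono2 hC ha' b'0 (ltW bb) b1.
  rewrite !ger0_norm; lra.
have := ler_distD (C a' b) (C a b) (C a' b'); lra.
Qed.

End Main.

Section Main2.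
Variable R : realType.
Implicit Types (A B : R -> R -> R) (K : R -> R -> R -> R).

Lemma mA_mono A a : is_copula2 A -> 0 <= a <= 1 -> mono01 (fun s => A a s).
Proof. by move=> hA ha s u s0 su u1; exact: cop_mono2. Qed.
Lemma mB_mono B b : is_copula2 B -> 0 <= b <= 1 -> mono01 (fun s => B s b).
Proof. by move=> hB hb s u s0 su u1; exact: cop_mono1. Qed.

Lemma d2_01 A a t : is_copula2 A -> 0 <= a <= 1 -> 0 <= t <= 1 -> 0 <= d2 A a t <= 1.
Proof. by move=> hA ha ht; rewrite /d2; apply: deriv01 => //; exact: mA_mono. Qed.
Lemma d1_01 B b t : is_copula2 B -> 0 <= b <= 1 -> 0 <= t <= 1 -> 0 <= d1 B t b <= 1.
Proof. by move=> hB hb ht; rewrite /d1; apply: deriv01 => //; exact: mB_mono. Qed.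

Lemma intg_meas K A B a b : (forall t, 0 <= t <= 1 -> is_copula2 (K t)) ->
  (forall x y : R, 0 <= x <= 1 -> 0 <= y <= 1 ->
     measurable_fun (`[0, 1] : set R) (fun t => K t x y)) ->
  is_copula2 A -> is_copula2 B -> 0 <= a <= 1 -> 0 <= b <= 1 ->
  measurable_fun (`[0, 1] : set R) (fun t => K t (d2 A a t) (d1 B t b)).
Proof.
move=> hK mK hA hB ha hb.
apply: comp_meas => //.
- by move=> t ht; exact: cop_lip (hK t ht).
- by rewrite /d2; apply: deriv_meas; exact: mA_mono.
- by rewrite /d1; apply: deriv_meas; exact: mB_mono.
- by move=> t ht; exact: d2_01.
- by move=> t ht; exact: d1_01.
Qed.

Lemma intg_bnd K A B a b t : (forall t, 0 <= t <= 1 -> is_copula2 (K t)) ->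
  is_copula2 A -> is_copula2 B -> 0 <= a <= 1 -> 0 <= b <= 1 -> 0 <= t <= 1 ->
  0 <= K t (d2 A a t) (d1 B t b) <= 1.
Proof.
move=> hK hA hB ha hb ht; apply: cop_bnd; first exact: hK.
  exact: d2_01.
exact: d1_01.
Qed.

Local Notation mu := (@lebesgue_measure R).

Lemma int_fin (f : R -> R) (E : set R) : measurable E -> E `<=` `[0, 1] ->
  measurable_fun (`[0, 1] : set R) f -> (forall t, 0 <= t <= 1 -> 0 <= f t <= 1) ->
  (\int[mu]_(t in E) (f t)%:E)%E \is a fin_num.
Proof.
move=> mE sE mf hf.
have hf' t : E t -> 0 <= f t <= 1.
  by move=> /sE; rewrite /= in_itv /=; exact: hf.
rewrite ge0_fin_numE; last by apply: integral_ge0 => t /hf' /andP[? ?]; rewrite lee_fin.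
apply: (@le_lt_trans _ _ (\int[mu]_(t in E) (cst 1%:E t))%E).
  apply: ge0_le_integral => //.
  - by move=> t /hf' /andP[? ?]; rewrite lee_fin.
  - by apply/measurable_EFinP; apply: (measurable_funS _ sE mf).
  - by move=> t /hf' /andP[? ?]; rewrite lee_fin.
rewrite integral_cst // mul1e.
apply: (@le_lt_trans _ _ (mu `[0, 1]%classic)).
  by apply: le_measure => //; rewrite inE.
by rewrite lebesgue_measure_itv /= lte01 EFinN sube0 ltry.
Qed.


Lemma int_le (f g : R -> R) (E : set R) : measurable E -> E `<=` `[0, 1] ->
  measurable_fun (`[0, 1] : set R) f -> measurable_fun (`[0, 1] : set R) g ->
  (forall t, 0 <= t <= 1 -> 0 <= f t <= g t) ->
  (\int[mu]_(t in E) (f t)%:E <= \int[mu]_(t in E) (g t)%:E)%E.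
Proof.
move=> mE sE mf mg hfg.
have h t : E t -> 0 <= f t <= g t.
  by move=> /sE; rewrite /= in_itv /=; exact: hfg.
apply: ge0_le_integral => //.
- by move=> t /h /andP[? ?]; rewrite lee_fin.
- by apply/measurable_EFinP; apply: (measurable_funS _ sE mf).
- by apply/measurable_EFinP; apply: (measurable_funS _ sE mg).
- by move=> t /h /andP[? ?]; rewrite lee_fin.
Qed.

Lemma int_split (f : R -> R) c : 0 <= c <= 1 ->
  measurable_fun (`[0, 1] : set R) f -> (forall t, 0 <= t <= 1 -> 0 <= f t) ->
  (\int[mu]_(t in `[0%R, 1%R]) (f t)%:E =
   \int[mu]_(t in `[0%R, c]) (f t)%:E + \int[mu]_(t in `]c, 1%R]) (f t)%:E)%E.
Proof.
move=> /andP[c0 c1] mf hf.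
have E : `[0, 1]%classic = `[0, c]%classic `|` `]c, 1]%classic :> set R.
  by apply: itv_bndbnd_setU; rewrite bnd_simp.
rewrite E; apply: ge0_integral_setU => //.
- by rewrite -E; apply/measurable_EFinP.
- by rewrite -E => t; rewrite /= in_itv /= => /hf; rewrite lee_fin.
- apply/disj_setPS => t [] /=; rewrite !in_itv /= => /andP[_ tc] /andP[ct _].
  by move: (lt_le_trans ct tc); rewrite ltxx.
Qed.

End Main2.

Unset Implicit Arguments. Set Strict Implicit.

Lemma fin_ineq (R : realType) (a b b' c p q : R) : p <= q ->
  a + (b + p) + c - b <= a + (b' + q) + c - b'.
Proof. move=> h; lra. Qed.

Theorem proposition3p4 (R : realType) (C C' : R -> R -> R -> R) :
  (forall t, 0 <= t <= 1 -> is_copula2 (C t)) ->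
  (forall t, 0 <= t <= 1 -> is_copula2 (C' t)) ->
  (forall x y : R, 0 <= x <= 1 -> 0 <= y <= 1 ->
     measurable_fun (`[0, 1] : set R) (fun t => C t x y)) ->
  (forall x y : R, 0 <= x <= 1 -> 0 <= y <= 1 ->
     measurable_fun (`[0, 1] : set R) (fun t => C' t x y)) ->
  (forall t, 0 <= t <= 1 -> copula2_le (C t) (C' t)) ->
  forall A B : R -> R -> R, is_copula2 A -> is_copula2 B ->
    copula3_le (star_prod C A B) (star_prod C' A B).
Proof.
move=> hC hC' mC mC' hle A B hA hB u1 u2 u3 hu1 hu2 hu3.
have sub c : 0 <= c <= 1 -> `[0%R, c]%classic `<=` (`[0, 1] : set R).
  move=> /andP[c0 c1] t; rewrite /= !in_itv /= => /andP[t0 tc].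
  by rewrite t0 (le_trans tc c1).
have subo c : 0 <= c <= 1 -> `]c, 1%R]%classic `<=` (`[0, 1] : set R).
  move=> /andP[c0 c1] t; rewrite /= !in_itv /= => /andP[t0 tc].
  by rewrite tc (le_trans c0 (ltW t0)).
have fin K : (forall t, 0 <= t <= 1 -> is_copula2 (K t)) ->
  (forall x y : R, 0 <= x <= 1 -> 0 <= y <= 1 ->
     measurable_fun (`[0, 1] : set R) (fun t => K t x y)) ->
  forall a b (E : set R), 0 <= a <= 1 -> 0 <= b <= 1 -> measurable E -> E `<=` `[0, 1] ->
  (\int[@lebesgue_measure R]_(t in E) (K t (d2 A a t) (d1 B t b))%:E)%E \is a fin_num.
  move=> hK mK a b E ha hb mE sE; apply: int_fin => //.
    exact: intg_meas.
  by move=> t ht; exact: intg_bnd.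
have split K : (forall t, 0 <= t <= 1 -> is_copula2 (K t)) ->
  (forall x y : R, 0 <= x <= 1 -> 0 <= y <= 1 ->
     measurable_fun (`[0, 1] : set R) (fun t => K t x y)) ->
  forall a b c, 0 <= a <= 1 -> 0 <= b <= 1 -> 0 <= c <= 1 ->
  star_prod K A B a 1 b = star_prod K A B a c b +
    fine (\int[@lebesgue_measure R]_(t in `]c, 1%R]) (K t (d2 A a t) (d1 B t b))%:E)%E.
  move=> hK mK a b c ha hb hc; rewrite /star_prod (@int_split R _ c) //.
  - rewrite fineD //.
      by apply: fin => //; solve [exact: sub | exact: subo | exact: measurable_itv].
    by apply: fin => //; solve [exact: sub | exact: subo | exact: measurable_itv].
  - exact: intg_meas.
  - by move=> t ht; case/andP: (intg_bnd hK hA hB ha hb ht).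
have meC a b := @intg_meas R C A B a b hC mC hA hB.
have meC' a b := @intg_meas R C' A B a b hC' mC' hA hB.
have leCC' a b t : 0 <= a <= 1 -> 0 <= b <= 1 -> 0 <= t <= 1 ->
    0 <= C t (d2 A a t) (d1 B t b) <= C' t (d2 A a t) (d1 B t b).
  move=> ha hb ht; case/andP: (intg_bnd hC hA hB ha hb ht) => -> _ /=.
  by apply: hle => //; [exact: d2_01|exact: d1_01].
split.
  rewrite /star_prod; apply: fine_le.
  - by apply: fin => //; solve [exact: sub | exact: subo | exact: measurable_itv].
  - by apply: fin => //; solve [exact: sub | exact: subo | exact: measurable_itv].
  apply: int_le; try solve [exact: measurable_itv | exact: sub | exact: subo | exact: meC | exact: meC'].
  by move=> t ht; exact: leCC'.
have eq1 : star_prod C A B u1 u2 1 = star_prod C' A B u1 u2 1.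
  rewrite /star_prod; congr fine; apply: eq_integral => t.
  rewrite inE /= in_itv /= => /andP[t0 tu]; have ht : 0 <= t <= 1.
    by rewrite t0 (le_trans tu); case/andP: hu2.
  have Bid s : 0 <= s <= 1 -> B s 1 = s by move=> hs; have [_ [_ [-> _]]] := hB.1 s hs.
  have [e|e] := derivid Bid ht.
  - rewrite /d1 e; have [-> _] := (hC t ht).1 _ (d2_01 hA hu1 ht).
    by have [-> _] := (hC' t ht).1 _ (d2_01 hA hu1 ht).
  - rewrite /d1 e; have [_ [_ [-> _]]] := (hC t ht).1 _ (d2_01 hA hu1 ht).
    by have [_ [_ [-> _]]] := (hC' t ht).1 _ (d2_01 hA hu1 ht).
have eq2 : star_prod C A B 1 u2 u3 = star_prod C' A B 1 u2 u3.
  rewrite /star_prod; congr fine; apply: eq_integral => t.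
  rewrite inE /= in_itv /= => /andP[t0 tu]; have ht : 0 <= t <= 1.
    by rewrite t0 (le_trans tu); case/andP: hu2.
  have Aid s : 0 <= s <= 1 -> A 1 s = s by move=> hs; have [_ [_ [_ ->]]] := hA.1 s hs.
  have [e|e] := derivid Aid ht.
  - rewrite /d2 e; have [_ [-> _]] := (hC t ht).1 _ (d1_01 hB hu3 ht).
    by have [_ [-> _]] := (hC' t ht).1 _ (d1_01 hB hu3 ht).
  - rewrite /d2 e; have [_ [_ [_ ->]]] := (hC t ht).1 _ (d1_01 hB hu3 ht).
    by have [_ [_ [_ ->]]] := (hC' t ht).1 _ (d1_01 hB hu3 ht).
have le3 : fine (\int[@lebesgue_measure R]_(t in `]u2, 1%R]) (C t (d2 A u1 t) (d1 B t u3))%:E)%E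
        <= fine (\int[@lebesgue_measure R]_(t in `]u2, 1%R]) (C' t (d2 A u1 t) (d1 B t u3))%:E)%E.
  apply: fine_le.
  - by apply: fin => //; solve [exact: sub | exact: subo | exact: measurable_itv].
  - by apply: fin => //; solve [exact: sub | exact: subo | exact: measurable_itv].
  apply: int_le; try solve [exact: measurable_itv | exact: sub | exact: subo | exact: meC | exact: meC'].
  by move=> t ht; exact: leCC'.
rewrite /survival3 eq1 eq2 (split C hC mC u1 u3 u2) // (split C' hC' mC' u1 u3 u2) //.
exact: fin_ineq le3.
Qed.
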